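(* (i) Let $B_1,\dots,B_n$ and $C$ be subspaces of a finite-dimensional vector space $W$ over a finite field and let $\alpha\subseteq\{1,\dots,n\}$. Then there exists a subspace $A$ of $W$ with $H(A)=H(C\mid B_j:j\in\alpha)$ and $H(T_A(C)\mid T_A(B_j):j\in\alpha)=0$. (ii) Let $\{B^i_1,\dots,B^i_n,C^i\}_{i=1}^\infty$ be a sequence of collections of subspaces (for each $i$, of a finite-dimensional vector space $W^i$ over a finite field), let $\alpha\subseteq\{1,\dots,n\}$, and let $k(i)>0$ satisfy $\lim_{i\to\infty}\frac{1}{k(i)}H(C^i\mid B^i_j:j\in\alpha)=0$. Then there exist subspaces $A^i$ of $W^i$ such that for every $i$, $H(A^i)=H(C^i\mid B^i_j:j\in\alpha)$ and $H(T_{A^i}(C^i)\mid T_{A^i}(B^i_j):j\in\alpha)=0$, and for all $\beta\subseteq\{1,\dots,n\}$, $\lim_{i\to\infty}\frac{1}{k(i)}H(T_{A^i}(B^i_j):j\in\beta)=\lim_{i\to\infty}\frac{1}{k(i)}H(B^i_j:j\in\beta)$ (in the sense that if either limit exists then both exist and are equal).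
   Context: For subspaces, $\langle\cdots\rangle$ denotes the span. $H(B_j:j\in\beta)=\dim\langle B_j:j\in\beta\rangle$ and $H(\mathcal{S}\mid\mathcal{R})=\dim\langle\mathcal{S},\mathcal{R}\rangle-\dim\langle\mathcal{R}\rangle$. For a subspace $A$ of $W$, choose any subspace $A^*$ with $\langle A,A^*\rangle=W$ and $A\cap A^*=\{0\}$; for $u=u_1+u_2$ with $u_1\in A^*,u_2\in A$ set $T_A(u)=u_1$, and $T_A(B)=\{T_A(u):u\in B\}$ for a subspace $B$. (The dimensions appearing in the statement do not depend on the choice of $A^*$.) *)

(* Defs.v *)
From HB Require Import structures.
From mathcomp Require Import all_boot all_order all_algebra.
Set Implicit Arguments. Unset Strict Implicit. Unset Printing Implicit Defensive.
Import GRing.Theory.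
Local Open Scope ring_scope.

Definition Hspan (K : fieldType) (vT : vectType K) (n : nat)
  (B : 'I_n -> {vspace vT}) (beta : {set 'I_n}) : nat :=
  \dim (\sum_(j in beta) B j)%VS.

Definition Hcond (K : fieldType) (vT : vectType K) (n : nat)
  (S : {vspace vT}) (B : 'I_n -> {vspace vT}) (alpha : {set 'I_n}) : nat :=
  (\dim (S + \sum_(j in alpha) B j)%VS - \dim (\sum_(j in alpha) B j)%VS)%N.

Definition is_compl (K : fieldType) (vT : vectType K) (A Astar : {vspace vT}) : Prop :=
  (A + Astar)%VS = fullv /\ (A :&: Astar)%VS = 0%VS.

(* T_A(B) = image of B under the projection u = u1 + u2 |-> u1 (u1 in Astar, u2 in A),
   i.e. the projection onto Astar along A. *)
Definition TA (K : fieldType) (vT : vectType K) (Astar A B : {vspace vT}) : {vspace vT} :=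
  (daddv_pi Astar A @: B)%VS.

(* Main.v *)
Require Import Defs.
From Stdlib Require Import Reals Lra Lia Psatz.
From HB Require Import structures.
From mathcomp Require Import all_boot all_order all_algebra.
From Stdlib Require Import Reals.
From mathcomp Require Import zify.
Import GRing.Theory.
Local Open Scope ring_scope.

Section Lin.
Variables (K : fieldType) (vT : vectType K).
Implicit Types (U V A Astar : {vspace vT}).

Lemma pi_kill A Astar a : is_compl A Astar -> a \in A -> daddv_pi Astar A a = 0.
Proof.
move=> [hs hc] aA.
have hc' : (Astar :&: A = 0)%VS by rewrite capvC.
have := daddv_pi_add (w:=a) hc'; rewrite addvC hs memvf => /(_ isT).
rewrite (daddv_pi_id hc aA) => /eqP; rewrite -subr_eq0 addrK => /eqP //.
Qed.

Lemma lker_sub A Astar : is_compl A Astar -> (lker (daddv_pi Astar A) <= A)%VS.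
Proof.
move=> [hs hc].
have hc' : (Astar :&: A = 0)%VS by rewrite capvC.
apply/subvP=> w; rewrite memv_ker => /eqP w0.
have := daddv_pi_add (w:=w) hc'; rewrite addvC hs memvf => /(_ isT).
rewrite w0 add0r => <-; exact: memv_pi.
Qed.

Lemma dim_img_bounds A Astar U : is_compl A Astar ->
  (\dim (TA Astar A U) <= \dim U)%nat /\ (\dim U <= \dim (TA Astar A U) + \dim A)%nat.
Proof.
move=> hA; have := limg_ker_dim (daddv_pi Astar A) U; rewrite /TA.
have := dimvS (subv_trans (capvSr U _) (lker_sub A Astar hA)).
lia.
Qed.
End Lin.

Section Part1.
Variables (K : fieldType) (vT : vectType K).
Variables (n : nat) (B : 'I_n -> {vspace vT}) (C : {vspace vT}) (alpha : {set 'I_n}).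
Let S := (\sum_(j in alpha) B j)%VS.
Definition Achoice := (C :\: S)%VS.

Lemma Achoice_dim : \dim Achoice = Hcond C B alpha.
Proof.
rewrite /Hcond /Achoice -/S.
have := dimv_cap_compl C S; have := dimv_sum_cap C S; lia.
Qed.

Lemma TA_sum Astar A (beta : {set 'I_n}) :
  (\sum_(j in beta) TA Astar A (B j) = TA Astar A (\sum_(j in beta) B j))%VS.
Proof. by rewrite /TA limg_sum. Qed.

Lemma Achoice_good Astar : is_compl Achoice Astar ->
  Hcond (TA Astar Achoice C) (fun j => TA Astar Achoice (B j)) alpha = 0%nat.
Proof.
move=> hA; rewrite /Hcond TA_sum -/S.
have -> : (TA Astar Achoice C + TA Astar Achoice S = TA Astar Achoice S)%VS.
  apply/eqP; rewrite eqEsubv addvSr andbT subv_add subvv andbT.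
  rewrite /TA -{1}(addv_diff_cap C S) limgD subv_add; apply/andP; split.
  - apply/subvP=> w /memv_imgP [a aA ->]; rewrite (@pi_kill _ _ _ _ _ hA aA); exact: mem0v.
  - apply: limgS; exact: capvSr.
by rewrite subnn.
Qed.
End Part1.

Lemma cv_close (u v h : nat -> R) (l : R) :
  Un_cv h 0%R -> (forall i, Rabs (u i - v i) <= h i)%R -> Un_cv u l -> Un_cv v l.
Proof.
move=> Hh Hb Hu eps Heps.
have He2 : (eps / 2 > 0)%R by lra.
case: (Hh _ He2) => N1 HN1; case: (Hu _ He2) => N2 HN2.
exists (Nat.max N1 N2) => m Hm.
have m1 : (m >= N1)%coq_nat by apply: Nat.le_trans (Nat.le_max_l _ _) Hm.
have m2 : (m >= N2)%coq_nat by apply: Nat.le_trans (Nat.le_max_r _ _) Hm.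
have h1 := HN1 m m1; have h2 := HN2 m m2; have h3 := Hb m.
rewrite /Rdist in h1 h2 *.
have h4 : (Rabs (v m - u m) <= h m)%R by rewrite -Rabs_Ropp Ropp_minus_distr.
have h5 := Rabs_triang (v m - u m) (u m - l).
have e : (v m - u m + (u m - l) = v m - l)%R by ring.
rewrite e in h5.
have h6 := Rle_abs (h m - 0)%R. lra.
Qed.

Lemma cv_close_sym (u v h : nat -> R) (l : R) :
  Un_cv h 0%R -> (forall i, Rabs (u i - v i) <= h i)%R -> (Un_cv u l <-> Un_cv v l).
Proof.
move=> Hh Hb; split; first exact: cv_close Hh Hb.
apply: cv_close Hh _ => i; rewrite -Rabs_Ropp Ropp_minus_distr; exact: Hb.
Qed.

Lemma nat_div_bound (x y h : nat) (k : R) : (0 < k)%R ->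
  (x <= y)%nat -> (y <= x + h)%nat ->
  (Rabs (INR x / k - INR y / k) <= INR h / k)%R.
Proof.
move=> Hk /leP Hxy /leP Hyx.
have Hx := le_INR _ _ Hxy; have Hy := le_INR _ _ Hyx; rewrite plus_INR in Hy.
have Hik : (0 < / k)%R by apply: Rinv_0_lt_compat.
rewrite /Rdiv; apply: Rabs_le; split; nra.
Qed.

Local Close Scope ring_scope.

Theorem lemma4 :
  (* (i) *)
  (forall (F : finFieldType) (W : vectType F) (n : nat)
          (B : 'I_n -> {vspace W}) (C : {vspace W}) (alpha : {set 'I_n}),
   exists A : {vspace W},
     \dim A = Hcond C B alpha /\
     (forall Astar : {vspace W}, is_compl A Astar ->
        Hcond (TA Astar A C) (fun j => TA Astar A (B j)) alpha = 0%N))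
  /\
  (* (ii) *)
  (forall (n : nat) (alpha : {set 'I_n})
          (F : nat -> finFieldType) (W : forall i, vectType (F i))
          (B : forall i, 'I_n -> {vspace W i}) (C : forall i, {vspace W i})
          (k : nat -> R),
   (forall i, (0 < k i)%R) ->
   Un_cv (fun i => (INR (Hcond (C i) (B i) alpha) / k i)%R) 0%R ->
   exists A : forall i, {vspace W i},
     (forall i, \dim (A i) = Hcond (C i) (B i) alpha) /\
     (forall Astar : forall i, {vspace W i}, (forall i, is_compl (A i) (Astar i)) ->
        (forall i, Hcond (TA (Astar i) (A i) (C i))
                         (fun j => TA (Astar i) (A i) (B i j)) alpha = 0%N) /\
        (forall (beta : {set 'I_n}) (l : R),
           Un_cv (fun i => (INR (Hspan (fun j => TA (Astar i) (A i) (B i j)) beta) / k i)%R) l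
           <-> Un_cv (fun i => (INR (Hspan (B i) beta) / k i)%R) l))).
Proof.
split.
- move=> F W n B C alpha; exists (@Achoice _ _ _ B C alpha); split.
  + exact: Achoice_dim.
  + move=> Astar; exact: Achoice_good.
- move=> n alpha F W B C k Hk Hcv.
  exists (fun i => @Achoice _ _ _ (B i) (C i) alpha); split => [i|Astar HA].
  + exact: Achoice_dim.
  + split => [i|beta l]; first exact: Achoice_good.
    apply: (cv_close_sym _ _ _ _ Hcv) => i.
    rewrite /Hspan TA_sum.
    have [h1 h2] := @dim_img_bounds _ _ _ _ (\sum_(j in beta) B i j)%VS (HA i).
    rewrite Achoice_dim in h2.
    exact: (nat_div_bound _ _ _ _ (Hk i) h1 h2).
Qed.
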